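(* There exists $C>0$ such that the following holds. Let $d,r:\mathbb{N}\to\mathbb{N}$ be functions with $d$ nondecreasing, taking only odd values at least $5$, $d(n)\ge2r(n)+1$, and $r(n)\ge n$, $d(n)-2r(n)\ge n$ for all $n$. Let $\alpha_n=(1\;2\;\cdots\;d(n))$, $\beta_n=(1\;(1+r(n))\;(1+2r(n)))\in\mathrm{Alt}(d(n))$, $\alpha=(\alpha_n)_n,\beta=(\beta_n)_n\in\prod_n\mathrm{Alt}(d(n))$, $S=\{\alpha,\beta\}$ and $G=\langle S\rangle$. Then $\mathcal{L}_G^S(l)\le\exp(Cl^2\log l)$ for all integers $l\ge2$.
   Context: $\mathbb{N}=\{1,2,\dots\}$. $B_S(l)$ is the ball of radius $l$ about $e$ in the word metric of $S$. A local embedding of $A\subseteq G$ into a group $Q$ is an injective map $\psi:A\to Q$ with $\psi(gh)=\psi(g)\psi(h)$ whenever $g,h,gh\in A$. $\mathcal{L}_G^S(l)$ is the minimal order of a finite group admitting a local embedding of $B_S(l)$. *)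

(* Defs.v *)
From mathcomp Require Import all_boot all_fingroup.
From Stdlib Require Import Reals.
Set Implicit Arguments. Unset Strict Implicit. Unset Printing Implicit Defensive.

(* Index shift: the paper's index set is N = {1,2,...}; coordinate n : nat
   of our sequences stands for the paper's index n.+1. *)

(* The ambient group prod_{n in N} Sym(d(n)) (containing prod Alt(d(n))). *)
Definition prodP (d : nat -> nat) : Type := forall n : nat, {perm 'I_(d n.+1)}.

Definition mulP (d : nat -> nat) (g h : prodP d) : prodP d := fun n => (g n * h n)%g.
Definition invP (d : nat -> nat) (g : prodP d) : prodP d := fun n => (g n)^-1%g.
Definition oneP (d : nat -> nat) : prodP d := fun n => 1%g.

(* The d-cycle (1 2 ... d), on 'I_d = {0,...,d-1}: i |-> i+1 mod d. *)
Definition alpha_perm (k : nat) : {perm 'I_k} := perm (@ordS_inj k).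

(* The 3-cycle (1 (1+r) (1+2r)), i.e. 0 -> r -> 2r -> 0 on 'I_k
   (identity in the degenerate case 2r >= k, which never occurs under the
   hypotheses of the theorem). *)
Definition beta_perm (k r : nat) : {perm 'I_k} :=
  if @idP (r + r < k) is ReflectT H then
    let o0 : 'I_k := Ordinal (leq_ltn_trans (leq0n (r + r)) H) in
    let or : 'I_k := Ordinal (leq_ltn_trans (leq_addr r r) H) in
    let o2 : 'I_k := Ordinal H in
    (tperm o0 or * tperm o0 o2)%g
  else 1%g.

Definition alpha (d : nat -> nat) : prodP d := fun n => alpha_perm (d n.+1).
Definition beta (d r : nat -> nat) : prodP d := fun n => beta_perm (d n.+1) (r n.+1).

(* Evaluation of a word over S u S^-1: a letter (s, b) is s if b = false, s^-1 if b = true. *)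
Definition eval_word (d : nat -> nat) (w : seq (prodP d * bool)) : prodP d :=
  foldr (fun x acc => mulP (if x.2 then invP x.1 else x.1) acc) (oneP d) w.

Definition ball (d : nat -> nat) (S : seq (prodP d)) (l : nat) (g : prodP d) : Prop :=
  exists w : seq (prodP d * bool),
    size w <= l /\ List.Forall (fun x => List.In x.1 S) w /\ g = eval_word w.

Definition local_embedding (d : nat -> nat) (A : prodP d -> Prop)
    (Q : finGroupType) (psi : prodP d -> Q) : Prop :=
  (forall g h, A g -> A h -> psi g = psi h -> g = h) /\
  (forall g h, A g -> A h -> A (mulP g h) -> psi (mulP g h) = (psi g * psi h)%g).

(* L_G^S(l) <= x : since L_G^S(l) is the minimal order of a finite group
   admitting a local embedding of B_S(l), this holds iff some finite group
   of order <= x admits such a local embedding. *)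
Definition LEF_le (d : nat -> nat) (S : seq (prodP d)) (l : nat) (x : R) : Prop :=
  exists (Q : finGroupType) (psi : prodP d -> Q),
    local_embedding (ball S l) psi /\ (INR #|Q| <= x)%R.

(* Main.v *)
Require Import Defs.
From mathcomp Require Import all_boot all_fingroup.
From Stdlib Require Import Reals.
From mathcomp Require Import all_order ssralg ssrnum ssrint intdiv zify ring.
From Stdlib Require Import Reals ClassicalEpsilon FunctionalExtensionality Classical Lra Psatz.
Set Implicit Arguments. Unset Strict Implicit. Unset Printing Implicit Defensive.
Import Order.TTheory GRing.Theory Num.Theory.
From mathcomp Require Import ring.
Section PartA.
Local Open Scope ring_scope.

Definition gen (D R : nat) (b : bool) : {perm 'I_D} :=
  if b then beta_perm D R else alpha_perm D.
Definition letv (D R : nat) (x : bool * bool) : {perm 'I_D} :=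
  if x.2 then ((gen D R x.1)^-1)%g else gen D R x.1.
Definition evc (D R : nat) (w : seq (bool * bool)) : {perm 'I_D} :=
  foldr (fun x acc => (letv D R x * acc)%g) 1%g w.

Lemma evc_cat D R u v : evc D R (u ++ v) = (evc D R u * evc D R v)%g.
Proof. elim: u => [|x u IH] /=; first by rewrite mul1g. by rewrite IH mulgA. Qed.

Definition rep (D : nat) (p : 'I_D) (z : int) : Prop :=
  Posz (nat_of_ord p) = modz z (Posz D).

Lemma rep_trans (D : nat) (p : 'I_D) (z z' : int) : rep p z -> modz z (Posz D) = modz z' (Posz D) -> rep p z'.
Proof. by rewrite /rep => -> . Qed.

Lemma rep_eqmod (D : nat) (p : 'I_D) (z z' : int) : rep p z -> rep p z' -> modz z (Posz D) = modz z' (Posz D).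
Proof. by rewrite /rep => <- <-. Qed.

Lemma rep_inj (D : nat) (p q : 'I_D) (z z' : int) : rep p z -> rep q z' -> modz z (Posz D) = modz z' (Posz D) -> p = q.
Proof.
rewrite /rep => Hp Hq E; apply: val_inj => /=.
by apply/eqP; rewrite -eqz_nat; apply/eqP; rewrite Hp Hq.
Qed.

Lemma rep_self D (p : 'I_D) : rep p (Posz (nat_of_ord p)).
Proof.
rewrite /rep modz_small //; apply/andP; split => //.
by rewrite ltz_nat ltn_ord.
Qed.

Lemma exists_rep (D : nat) (z : int) : (0 < D)%nat -> exists p : 'I_D, rep p z.
Proof.
move=> HD.
have H0 : 0 <= modz z (Posz D) by apply: modz_ge0; rewrite eqz_nat -lt0n.
have H1 : (absz (modz z (Posz D)) < D)%nat.
  have HD' : (0 < Posz D) by rewrite ltz_nat.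
  by rewrite -ltz_nat gez0_abs // (ltz_pmod _ HD').
exists (Ordinal H1); rewrite /rep /=.
by rewrite gez0_abs.
Qed.

Lemma rep_alpha (D : nat) (p : 'I_D) (z : int) : rep p z -> rep (alpha_perm D p) (z + 1).
Proof.
rewrite /rep /alpha_perm permE /= => Hp.
by rewrite -modz_nat -addn1 PoszD Hp modzDml.
Qed.

Lemma rep_alphaV (D : nat) (p : 'I_D) (z : int) : rep p z -> rep ((alpha_perm D)^-1%g p) (z - 1).
Proof.
move=> Hp; set q := ((alpha_perm D)^-1%g p).
have Hq : alpha_perm D q = p by rewrite /q permKV.
have := rep_alpha (rep_self q); rewrite Hq => Hp'.
have E := rep_eqmod Hp Hp'.
apply: (@rep_trans _ _ (Posz q)); first exact: rep_self.
by rewrite -(modzDml z) E modzDml addrK.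
Qed.

End PartA.
Section PartA2.
Local Open Scope ring_scope.

Lemma beta_val (D R : nat) (p : 'I_D) : (0 < R)%nat -> (R + R < D)%nat ->
  nat_of_ord (beta_perm D R p) =
  (if nat_of_ord p == 0%nat then R else if nat_of_ord p == R then (R + R)%nat
   else if nat_of_ord p == (R + R)%nat then 0%nat else nat_of_ord p).
Proof.
move=> HR HD; rewrite /beta_perm; destruct (@idP (R + R < D)%nat) as [H|H]; last by []. rewrite permM.
set o0 := Ordinal (leq_ltn_trans (leq0n (R + R)) H).
set o1 := Ordinal (leq_ltn_trans (leq_addr R R) H).
set o2 := Ordinal H.
have v0 : nat_of_ord o0 = 0%nat by [].
have v1 : nat_of_ord o1 = R by [].
have v2 : nat_of_ord o2 = (R+R)%nat by [].
case: (tpermP o0 o1 p) => [Hp|Hp|Hp0 Hp1]; case: tpermP => [E|E|E0 E1].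
all: repeat match goal with
  | H : _ = _ |- _ => move/(congr1 val): H => /= H
  | H : ~ (_ = _) |- _ => have {H} : val _ <> val _ := (fun e => H (val_inj e)); move=> /= H
  end.
all: rewrite ?v0 ?v1 ?v2 //.
all: repeat (case: eqP => /= ?); lia.
Qed.

Lemma betaV_val (D R : nat) (p : 'I_D) : (0 < R)%nat -> (R + R < D)%nat ->
  nat_of_ord ((beta_perm D R)^-1%g p) =
  (if nat_of_ord p == 0%nat then (R + R)%nat else if nat_of_ord p == R then 0%nat
   else if nat_of_ord p == (R + R)%nat then R else nat_of_ord p).
Proof.
move=> HR HD; set q := ((beta_perm D R)^-1%g p).
have Hq : beta_perm D R q = p by rewrite /q permKV.
have := congr1 (@nat_of_ord D) Hq; rewrite beta_val // => <-.
move: (nat_of_ord q) => m.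
case: (m =P 0%nat) => [e0|/eqP/negbTE h0]; case: (m =P R) => [e1|/eqP/negbTE h1];
  case: (m =P (R+R)%nat) => [e2|/eqP/negbTE h2];
  rewrite ?h0 ?h1 ?h2; rewrite ?e0 ?e1 ?e2 ?eqxx /=; rewrite ?h0 ?h1 ?h2;
  repeat (case: eqP => /= ?); lia.
Qed.

End PartA2.
Section PartA3.
Local Open Scope ring_scope.

Definition inr (rho : nat) (o : int) : bool := (- Posz rho <= o) && (o <= Posz rho).

Definition near (D R rho : nat) (p : 'I_D) : Prop :=
  exists i o, (i < 3)%nat /\ inr rho o /\ rep p (Posz (i * R) + o).

Definition nxt (j : nat) : nat := if j == 2%nat then 0%nat else j.+1.
Definition prv (j : nat) : nat := if j == 0%nat then 2%nat else j.-1.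

Lemma rep_nat (D : nat) (p : 'I_D) (k : nat) : (k < D)%nat -> rep p (Posz k) <-> nat_of_ord p = k.
Proof.
move=> Hk; rewrite /rep modz_small; last by apply/andP; split => //; rewrite ltz_nat.
by split => [/eqP|->//]; rewrite eqz_nat => /eqP.
Qed.

Lemma beta_anchor (D R : nat) (p : 'I_D) j : (0 < R)%nat -> (R + R < D)%nat ->
  (j < 3)%nat -> nat_of_ord p = (j * R)%nat -> nat_of_ord (beta_perm D R p) = (nxt j * R)%nat.
Proof.
move=> HR HD Hj e; rewrite beta_val // e.
rewrite /nxt /prv; case: j Hj e => [|[|[|j]]] //= _ _; repeat (case: eqP => /= ?); lia.
Qed.

Lemma betaV_anchor (D R : nat) (p : 'I_D) j : (0 < R)%nat -> (R + R < D)%nat ->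
  (j < 3)%nat -> nat_of_ord p = (j * R)%nat ->
  nat_of_ord ((beta_perm D R)^-1%g p) = (prv j * R)%nat.
Proof.
move=> HR HD Hj e; rewrite betaV_val // e.
rewrite /nxt /prv; case: j Hj e => [|[|[|j]]] //= _ _; repeat (case: eqP => /= ?); lia.
Qed.

Lemma beta_nonanchor (D R : nat) (p : 'I_D) : (0 < R)%nat -> (R + R < D)%nat ->
  (forall j, (j < 3)%nat -> nat_of_ord p <> (j * R)%nat) -> beta_perm D R p = p.
Proof.
move=> HR HD Hn; apply: val_inj => /=; rewrite beta_val //.
have h0 := Hn 0%nat isT; have h1 := Hn 1%nat isT; have h2 := Hn 2%nat isT.
repeat (case: eqP => /= ?); lia.
Qed.

Lemma betaV_nonanchor (D R : nat) (p : 'I_D) : (0 < R)%nat -> (R + R < D)%nat ->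
  (forall j, (j < 3)%nat -> nat_of_ord p <> (j * R)%nat) -> (beta_perm D R)^-1%g p = p.
Proof.
move=> HR HD Hn; apply: val_inj => /=; rewrite betaV_val //.
have h0 := Hn 0%nat isT; have h1 := Hn 1%nat isT; have h2 := Hn 2%nat isT.
repeat (case: eqP => /= ?); lia.
Qed.

Lemma modeq_small (D L : nat) (z a b : int) :
  modz (z + a) (Posz D) = modz (z + b) (Posz D) ->
  inr L a -> inr L b -> (L + L < D)%nat -> a = b.
Proof.
move=> E Ha Hb HD.
have : (modz (z + a) (Posz D) == modz (z + b) (Posz D)) by apply/eqP.
rewrite eqz_mod_dvd => /dvdzP [k Hk].
move: Ha Hb; rewrite /inr => /andP [Ha1 Ha2] /andP [Hb1 Hb2].
have Hk' : a - b = k * Posz D by rewrite -Hk; lia.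
have HD' : Posz L + Posz L < Posz D by lia.
have : k = 0 \/ 1 <= k \/ k <= -1 by lia.
case=> [k0|[kp|kn]].
- by move: Hk'; rewrite k0 mul0r; lia.
- have : Posz D <= k * Posz D by rewrite -[X in X <= _]mul1r ler_pM2r //; lia.
  lia.
- have : k * Posz D <= - Posz D by rewrite -mulN1r ler_pM2r //; lia.
  lia.
Qed.

Fixpoint aw (w : seq (bool * bool)) : int :=
  match w with
  | [::] => 0
  | x :: w' => (if x.1 then 0 else if x.2 then -1 else 1) + aw w'
  end.

Lemma aw_bound w : inr (size w) (aw w).
Proof.
elim: w => [|x w IH] //=; move: IH; rewrite /inr => /andP [h1 h2].
case: x => [[] []] /=; apply/andP; split; lia.
Qed.

Lemma evc_cons D R x w p : evc D R (x :: w) p = evc D R w (letv D R x p).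
Proof. by rewrite /= permM. Qed.

Lemma inr_mono r r' o : (r <= r')%nat -> inr r o -> inr r' o.
Proof. rewrite /inr => h /andP [h1 h2]; apply/andP; split; lia. Qed.

Lemma jR_lt (D R j : nat) : (R + R < D)%nat -> (j < 3)%nat -> (j * R < D)%nat.
Proof. move=> h hj; case: j hj => [|[|[|j]]] //= _; lia. Qed.

End PartA3.
Section Sim.
Local Open Scope ring_scope.
Variables (D1 R1 D2 R2 B : nat).
Hypotheses (HR1 : (0 < R1)%nat) (HD1 : (R1 + R1 < D1)%nat)
           (HR2 : (0 < R2)%nat) (HD2 : (R2 + R2 < D2)%nat).
Hypothesis Hpat : forall (i j : nat) (o o' : int), (i < 3)%nat -> (j < 3)%nat ->
  inr B o -> inr B o' ->
  (modz (Posz (i * R1) + o) (Posz D1) = modz (Posz (j * R1) + o') (Posz D1) <->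
   modz (Posz (i * R2) + o) (Posz D2) = modz (Posz (j * R2) + o') (Posz D2)).

Definition Rel (rho : nat) (p1 : 'I_D1) (p2 : 'I_D2) : Prop :=
  exists i o, (i < 3)%nat /\ inr rho o /\ rep p1 (Posz (i * R1) + o) /\ rep p2 (Posz (i * R2) + o).


Lemma Rel_mono r r' p1 p2 : (r <= r')%nat -> Rel r p1 p2 -> Rel r' p1 p2.
Proof.
move=> h [i [o [Hi [Ho [H1 H2]]]]]; exists i, o; split => //; split => //.
exact: inr_mono Ho.
Qed.


Lemma anchor1 (p1 : 'I_D1) (p2 : 'I_D2) i o j : (i < 3)%nat -> (j < 3)%nat -> inr B o ->
  rep p1 (Posz (i * R1) + o) -> rep p2 (Posz (i * R2) + o) ->
  (nat_of_ord p1 = (j * R1)%nat <-> nat_of_ord p2 = (j * R2)%nat).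
Proof.
move=> Hi Hj Ho H1 H2.
have Z : inr B 0 by rewrite /inr; apply/andP; split; lia.
rewrite -(rep_nat p1 (jR_lt HD1 Hj)) -(rep_nat p2 (jR_lt HD2 Hj)).
have e1 : Posz (j * R1) = Posz (j * R1) + 0 by rewrite addr0.
have e2 : Posz (j * R2) = Posz (j * R2) + 0 by rewrite addr0.
split => H.
- apply: (rep_trans H2); rewrite e2; apply: (proj1 (Hpat Hi Hj Ho Z)); rewrite -e1.
  exact: rep_eqmod H1 H.
- apply: (rep_trans H1); rewrite e1; apply: (proj2 (Hpat Hi Hj Ho Z)); rewrite -e2.
  exact: rep_eqmod H2 H.
Qed.

Lemma sim_letter x rho p1 p2 : (rho < B)%nat -> Rel rho p1 p2 ->
  Rel rho.+1 (letv D1 R1 x p1) (letv D2 R2 x p2).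
Proof.
move=> Hr [i [o [Hi [Ho [H1 H2]]]]].
have HoB : inr B o by apply: inr_mono Ho; lia.
case: x => [[] []]; rewrite /letv /gen /=.
-
  case: (classic (exists j, (j < 3)%nat /\ nat_of_ord p1 = (j * R1)%nat)).
  + move=> [j [Hj E1]].
    have E2 : nat_of_ord p2 = (j * R2)%nat by apply/(anchor1 Hi Hj HoB H1 H2).
    have Hp : (prv j < 3)%nat by rewrite /prv; case: j Hj {E1 E2} => [|[|[|j]]].
    exists (prv j), 0; split => //; split; first by rewrite /inr; apply/andP; split; lia.
    rewrite !addr0; split; apply/rep_nat; try apply: jR_lt => //.
    + exact: betaV_anchor.
    + exact: betaV_anchor.
  + move=> Hn.
    have Hn1 : forall j, (j < 3)%nat -> nat_of_ord p1 <> (j * R1)%nat by move=> j hj e; apply: Hn; exists j.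
    have Hn2 : forall j, (j < 3)%nat -> nat_of_ord p2 <> (j * R2)%nat.
      by move=> j hj e; apply: (Hn1 j hj); apply/(anchor1 Hi hj HoB H1 H2).
    rewrite !betaV_nonanchor //; exists i, o; split => //; split => //.
    exact: inr_mono Ho.
- case: (classic (exists j, (j < 3)%nat /\ nat_of_ord p1 = (j * R1)%nat)).
  + move=> [j [Hj E1]].
    have E2 : nat_of_ord p2 = (j * R2)%nat by apply/(anchor1 Hi Hj HoB H1 H2).
    have Hp : (nxt j < 3)%nat by rewrite /nxt; case: j Hj {E1 E2} => [|[|[|j]]].
    exists (nxt j), 0; split => //; split; first by rewrite /inr; apply/andP; split; lia.
    rewrite !addr0; split; apply/rep_nat; try apply: jR_lt => //.
    + exact: beta_anchor.
    + exact: beta_anchor.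
  + move=> Hn.
    have Hn1 : forall j, (j < 3)%nat -> nat_of_ord p1 <> (j * R1)%nat by move=> j hj e; apply: Hn; exists j.
    have Hn2 : forall j, (j < 3)%nat -> nat_of_ord p2 <> (j * R2)%nat.
      by move=> j hj e; apply: (Hn1 j hj); apply/(anchor1 Hi hj HoB H1 H2).
    rewrite !beta_nonanchor //; exists i, o; split => //; split => //.
    exact: inr_mono Ho.
- exists i, (o - 1); split => //; split.
    by move: Ho; rewrite /inr => /andP [h1 h2]; apply/andP; split; lia.
  by rewrite !addrA; split; apply: rep_alphaV.
- exists i, (o + 1); split => //; split.
    by move: Ho; rewrite /inr => /andP [h1 h2]; apply/andP; split; lia.
  by rewrite !addrA; split; apply: rep_alpha.
Qed.

Lemma sim_word w rho p1 p2 : (rho + size w <= B)%nat -> Rel rho p1 p2 ->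
  Rel (rho + size w) (evc D1 R1 w p1) (evc D2 R2 w p2).
Proof.
elim: w rho p1 p2 => [|x w IH] rho p1 p2 /=.
  by rewrite addn0 !perm1.
move=> Hb HR; rewrite !evc_cons.
have -> : (rho + (size w).+1 = rho.+1 + size w)%nat by lia.
apply: IH; first lia.
apply: sim_letter => //; lia.
Qed.

Lemma Rel_fun rho p1 p2 q2 : (rho <= B)%nat -> Rel rho p1 p2 -> Rel rho p1 q2 -> p2 = q2.
Proof.
move=> Hr [i [o [Hi [Ho [H1 H2]]]]] [j [o' [Hj [Ho' [H1' H2']]]]].
apply: (rep_inj H2 H2'); apply: (proj1 (Hpat Hi Hj (inr_mono Hr Ho) (inr_mono Hr Ho'))).
exact: rep_eqmod H1 H1'.
Qed.

Lemma Rel_inj rho p1 q1 p2 : (rho <= B)%nat -> Rel rho p1 p2 -> Rel rho q1 p2 -> p1 = q1.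
Proof.
move=> Hr [i [o [Hi [Ho [H1 H2]]]]] [j [o' [Hj [Ho' [H1' H2']]]]].
apply: (rep_inj H1 H1'); apply: (proj2 (Hpat Hi Hj (inr_mono Hr Ho) (inr_mono Hr Ho'))).
exact: rep_eqmod H2 H2'.
Qed.

End Sim.
Section Far.
Local Open Scope ring_scope.

Lemma near_mono (D R r r' : nat) (p : 'I_D) : (r <= r')%nat -> near R r p -> near R r' p.
Proof.
move=> h [i [o [Hi [Ho H]]]]; exists i, o; split => //; split => //.
move: Ho; rewrite /inr => /andP [h1 h2]; apply/andP; split; lia.
Qed.

Lemma far_nonanchor (D R r : nat) (p : 'I_D) : (R + R < D)%nat -> ~ near R r p ->
  forall j, (j < 3)%nat -> nat_of_ord p <> (j * R)%nat.
Proof.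
move=> HD Hf j Hj e; apply: Hf; exists j, 0; split => //.
have Z : inr r 0 by rewrite /inr; apply/andP; split; lia.
split => //.
have -> : Posz (j * R) + 0 = Posz (j * R) by rewrite addr0.
exact: (proj2 (rep_nat p (jR_lt HD Hj)) e).
Qed.

Lemma far_ev (D R : nat) w (p : 'I_D) (z : int) (rho : nat) :
  (0 < R)%nat -> (R + R < D)%nat -> (size w <= rho)%nat -> ~ near R rho p -> rep p z ->
  rep (evc D R w p) (z + aw w).
Proof.
move=> HR HD; elim: w p z rho => [|x w IH] p z rho /=.
  by move=> _ _; rewrite perm1 addr0.
move=> Hs Hf Hp; rewrite permM.
case: x => [[] []]; rewrite /letv /gen /=.
- rewrite betaV_nonanchor //; last exact: far_nonanchor Hf.
  rewrite add0r; apply: (IH _ _ rho) => //; lia.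
- rewrite beta_nonanchor //; last exact: far_nonanchor Hf.
  rewrite add0r; apply: (IH _ _ rho) => //; lia.
- rewrite addrA; apply: (IH _ _ rho.-1); first lia; last exact: rep_alphaV.
  move=> [i [o [Hi [Ho H]]]]; apply: Hf; exists i, (o + 1); split => //; split.
    by move: Ho; rewrite /inr => /andP [h1 h2]; apply/andP; split; lia.
  have H' := rep_alphaV Hp.
  apply: (rep_trans Hp).
  have E := rep_eqmod H' H.
  by rewrite -(subrK 1 z) -(modzDml (z - 1)) E modzDml addrA.
- rewrite addrA; apply: (IH _ _ rho.-1); first lia; last exact: rep_alpha.
  move=> [i [o [Hi [Ho H]]]]; apply: Hf; exists i, (o - 1); split => //; split.
    by move: Ho; rewrite /inr => /andP [h1 h2]; apply/andP; split; lia.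
  have H' := rep_alpha Hp.
  apply: (rep_trans Hp).
  have E := rep_eqmod H' H.
  by rewrite -(addrK 1 z) -(modzDml (z + 1)) E modzDml addrA.
Qed.

End Far.

Section OneDir.
Local Open Scope ring_scope.
Variables (D1 R1 D2 R2 L : nat).
Hypotheses (HR1 : (0 < R1)%nat) (HD1 : (R1 + R1 < D1)%nat)
           (HR2 : (0 < R2)%nat) (HD2 : (R2 + R2 < D2)%nat).
Hypothesis Hpat : forall (i j : nat) (o o' : int), (i < 3)%nat -> (j < 3)%nat ->
  inr (L + L) o -> inr (L + L) o' ->
  (modz (Posz (i * R1) + o) (Posz D1) = modz (Posz (j * R1) + o') (Posz D1) <->
   modz (Posz (i * R2) + o) (Posz D2) = modz (Posz (j * R2) + o') (Posz D2)).
Hypothesis Hbig1 : (L + L < D1)%nat.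
Hypothesis Hfar1 : exists z : 'I_D1, ~ near R1 L z.

Lemma one_dir u v : (size u <= L)%nat -> (size v <= L)%nat ->
  evc D1 R1 u = evc D1 R1 v -> evc D2 R2 u = evc D2 R2 v.
Proof.
move=> Hu Hv E; apply/permP => p2.
case: (classic (near R2 L p2)) => [[i [o [Hi [Ho H2]]]] | Hf].
- have [p1 H1] := @exists_rep D1 (Posz (i * R1) + o) (leq_ltn_trans (leq0n _) HD1).
  have HR : Rel R1 R2 L p1 p2 by exists i, o.
  have Hu' := sim_word HR1 HD1 HR2 HD2 Hpat (leq_add (leqnn L) Hu) HR.
  have Hv' := sim_word HR1 HD1 HR2 HD2 Hpat (leq_add (leqnn L) Hv) HR.
  have Hu'' := Rel_mono (leq_add (leqnn L) Hu) Hu'.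
  have Hv'' := Rel_mono (leq_add (leqnn L) Hv) Hv'.
  rewrite E in Hu''.
  exact: (Rel_fun Hpat (leqnn _) Hu'' Hv'').
- have [z1 Hz1] := Hfar1.
  have A1 := @far_ev _ _ u _ _ _ HR1 HD1 Hu Hz1 (rep_self z1).
  have B1 := @far_ev _ _ v _ _ _ HR1 HD1 Hv Hz1 (rep_self z1).
  rewrite E in A1.
  have Eq := modeq_small (rep_eqmod A1 B1) (inr_mono Hu (aw_bound u)) (inr_mono Hv (aw_bound v)) Hbig1.
  have A2 := @far_ev _ _ u _ _ _ HR2 HD2 Hu Hf (rep_self p2).
  have B2 := @far_ev _ _ v _ _ _ HR2 HD2 Hv Hf (rep_self p2).
  rewrite Eq in A2.
  exact: rep_inj A2 B2 erefl.
Qed.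

End OneDir.
Section Coord.
Local Open Scope ring_scope.

Lemma modz_eq_ex (x y : int) (D : nat) :
  modz x (Posz D) = modz y (Posz D) <-> exists k : int, x - y = k * Posz D.
Proof.
split.
- move=> E; have : (modz x (Posz D) == modz y (Posz D)) by apply/eqP.
  by rewrite eqz_mod_dvd => /dvdzP.
- move=> H; apply/eqP; rewrite eqz_mod_dvd; exact/dvdzP.
Qed.

Lemma small_k (x k : int) (D : nat) : x = k * Posz D -> - Posz D < x -> x < Posz D -> x = 0.
Proof.
move=> Hk h1 h2.
have : k = 0 \/ 1 <= k \/ k <= -1 by lia.
case=> [k0|[kp|kn]].
- by rewrite Hk k0 mul0r.
- have : Posz D <= k * Posz D by rewrite -[X in X <= _]mul1r ler_pM2r //; lia.
  lia.
- have : k * Posz D <= - Posz D by rewrite -mulN1r ler_pM2r //; lia.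
  lia.
Qed.

Lemma kbound (k c d R E B : int) : 1 <= R -> 1 <= E -> 0 <= B -> B < R + E ->
  -2 <= c <= 2 -> -B <= d <= B -> c * R + d = k * (2*R+E) -> -1 <= k <= 1.
Proof. move=> *. nia. Qed.

Lemma pat_dir (R E R' E' B : nat) (i j : nat) (o o' : int) :
  (0 < R)%nat -> (0 < E)%nat -> (0 < R')%nat -> (0 < E')%nat -> (B + B < R + E)%nat ->
  (i < 3)%nat -> (j < 3)%nat -> inr B o -> inr B o' ->
  (forall (c : int) (k : int) (d : int), -2 <= c <= 2 -> -1 <= k <= 1 ->
     - Posz (B + B) <= d <= Posz (B + B) ->
     c * Posz R + d = k * Posz (2 * R + E) -> c * Posz R' + d = k * Posz (2 * R' + E')) ->
  modz (Posz (i * R) + o) (Posz (R + R + E)) = modz (Posz (j * R) + o') (Posz (R + R + E)) ->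
  modz (Posz (i * R') + o) (Posz (R' + R' + E')) = modz (Posz (j * R') + o') (Posz (R' + R' + E')).
Proof.
move=> HR HE HR' HE' HB Hi Hj Ho Ho' Hlin /modz_eq_ex [k Hk]; apply/modz_eq_ex.
move: Ho Ho'; rewrite /inr => /andP [o1 o2] /andP [o3 o4].
have Hc : -2 <= Posz i - Posz j <= 2 by apply/andP; split; lia.
have Hd : - Posz (B + B) <= o - o' <= Posz (B + B) by apply/andP; split; lia.
have Hk' : (Posz i - Posz j) * Posz R + (o - o') = k * Posz (2 * R + E).
  have e2 : (2 * R + E = R + R + E)%nat by lia.
  rewrite e2 -Hk !PoszM; ring.
have Hkb : -1 <= k <= 1.
  apply: (@kbound k (Posz i - Posz j) (o - o') (Posz R) (Posz E) (Posz (B + B))) => //; try lia.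
exists k.
have := Hlin _ _ _ Hc Hkb Hd Hk'.
have e2 : (R' + R' + E' = 2 * R' + E')%nat by lia.
rewrite e2 !PoszM => <-.
ring.
Qed.

End Coord.
Section Coord2.
Local Open Scope ring_scope.

Lemma lin_fwd (R E T B : nat) (c k d : int) :
  (0 < R)%nat -> (0 < E)%nat -> (B + B < T)%nat -> (T <= R)%nat \/ (T <= E)%nat ->
  -2 <= c <= 2 -> -1 <= k <= 1 -> - Posz (B + B) <= d <= Posz (B + B) ->
  c * Posz R + d = k * Posz (2 * R + E) ->
  c * Posz (minn R T) + d = k * Posz (2 * minn R T + minn E T).
Proof.
move=> H1 H2 H3 H4 Hc Hk Hd.
have : c = -2 \/ c = -1 \/ c = 0 \/ c = 1 \/ c = 2 by lia.
have : k = -1 \/ k = 0 \/ k = 1 by lia.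
case=> [->|[->|->]]; case=> [->|[->|[->|[->|->]]]]; lia.
Qed.

Lemma lin_bwd (R E T B : nat) (c k d : int) :
  (0 < R)%nat -> (0 < E)%nat -> (B + B < T)%nat -> (T <= R)%nat \/ (T <= E)%nat ->
  -2 <= c <= 2 -> -1 <= k <= 1 -> - Posz (B + B) <= d <= Posz (B + B) ->
  c * Posz (minn R T) + d = k * Posz (2 * minn R T + minn E T) ->
  c * Posz R + d = k * Posz (2 * R + E).
Proof.
move=> H1 H2 H3 H4 Hc Hk Hd.
have : c = -2 \/ c = -1 \/ c = 0 \/ c = 1 \/ c = 2 by lia.
have : k = -1 \/ k = 0 \/ k = 1 by lia.
case=> [->|[->|->]]; case=> [->|[->|[->|[->|->]]]]; lia.
Qed.

Lemma far_exists (R E T L : nat) : (0 < R)%nat -> (0 < E)%nat ->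
  (T <= R)%nat \/ (T <= E)%nat -> (L + L + L + L + 2 <= T)%nat ->
  exists z : 'I_(R + R + E), ~ near R L z.
Proof.
move=> HR HE HT HL.
have [zv [Hz Hzv]] : exists zv, (zv < R + R + E)%nat /\
   ((T <= E)%nat /\ zv = (R + R + L + 1)%nat \/ (T <= R)%nat /\ zv = (R + L + 1)%nat).
  case: (leqP T E) => h.
    by exists (R + R + L + 1)%nat; split; [lia | left].
  by exists (R + L + 1)%nat; split; [lia | right; split => //; lia].
exists (Ordinal Hz) => [[i [o [Hi [Ho H]]]]].
have H' := rep_self (Ordinal Hz).
have /modz_eq_ex [k Hk] := rep_eqmod H H'.
move: Ho; rewrite /inr /= => /andP [o1 o2].
have Hx := small_k Hk.
move: Hx Hk => /=.
case: i Hi H => [|[|[|i]]] // _ _ /=; rewrite ?mul0n ?mul1n ?mul2n -?addnn; lia.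
Qed.

Definition mR (R T : nat) : nat := minn R T.
Definition mD (D R T : nat) : nat := (minn R T + minn R T + minn (D - (R + R)) T)%nat.

Lemma coord_equiv (D R T L : nat) u v : (0 < R)%nat -> (R + R < D)%nat ->
  (L + L + L + L + 2 <= T)%nat -> (size u <= L)%nat -> (size v <= L)%nat ->
  (evc D R u = evc D R v <-> evc (mD D R T) (mR R T) u = evc (mD D R T) (mR R T) v).
Proof.
move=> HR HD HT Hu Hv.
have [E HE] : exists E, D = (R + R + E)%nat by exists (D - (R + R))%nat; lia.
subst D.
have -> : mD (R + R + E) R T = (mR R T + mR R T + minn E T)%nat.
  by rewrite /mD /mR; congr (_ + _)%nat; congr minn; lia.
have HE0 : (0 < E)%nat by lia.
case: (boolP ((R < T) && (E < T))%nat) => [/andP [h1 h2] | hn].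
  have -> : mR R T = R by rewrite /mR; lia.
  by have -> : minn E T = E by lia.
have big : (T <= R)%nat \/ (T <= E)%nat.
  by move: hn; rewrite negb_and -!leqNgt => /orP.
set R' := mR R T; set E' := minn E T.
have HR' : (0 < R')%nat by rewrite /R' /mR; lia.
have HE' : (0 < E')%nat by rewrite /E'; lia.
have big' : (T <= R')%nat \/ (T <= E')%nat by rewrite /R' /E' /mR; lia.
have Hpat : forall (i j : nat) (o o' : int), (i < 3)%nat -> (j < 3)%nat ->
  inr (L + L) o -> inr (L + L) o' ->
  (modz (Posz (i * R) + o) (Posz (R + R + E)) = modz (Posz (j * R) + o') (Posz (R + R + E)) <->
   modz (Posz (i * R') + o) (Posz (R' + R' + E')) = modz (Posz (j * R') + o') (Posz (R' + R' + E'))).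
  move=> i j o o' Hi Hj Ho Ho'; split.
  - apply: (pat_dir HR HE0 HR' HE' _ Hi Hj Ho Ho'); first lia.
    move=> c k d Hc Hk Hd; apply: (lin_fwd HR HE0 _ big Hc Hk Hd); lia.
  - apply: (pat_dir HR' HE' HR HE0 _ Hi Hj Ho Ho'); first (rewrite /R' /E' /mR; lia).
    move=> c k d Hc Hk Hd; apply: (lin_bwd HR HE0 _ big Hc Hk Hd); lia.
have Hpat' : forall (i j : nat) (o o' : int), (i < 3)%nat -> (j < 3)%nat ->
  inr (L + L) o -> inr (L + L) o' ->
  (modz (Posz (i * R')%nat + o) (Posz (R' + R' + E')) = modz (Posz (j * R') + o') (Posz (R' + R' + E')) <->
   modz (Posz (i * R) + o) (Posz (R + R + E)) = modz (Posz (j * R) + o') (Posz (R + R + E))).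
  by move=> i j o o' Hi Hj Ho Ho'; apply: iff_sym; apply: Hpat.
have HD1 : (R + R < R + R + E)%nat by lia.
have HD2 : (R' + R' < R' + R' + E')%nat by lia.
split.
- apply: (one_dir HR HD1 HR' HD2 Hpat) => //; first lia.
  exact: (far_exists HR HE0 big).
- apply: (one_dir HR' HD2 HR HD1 Hpat') => //; first (rewrite /R' /E' /mR; lia).
  exact: (far_exists HR' HE' big').
Qed.

End Coord2.
Lemma fact_le_pow n : (n`! <= expn n n)%nat.
Proof.
elim: n => [|n IH] //.
rewrite factS expnS.
apply: leq_mul => //.
apply: (leq_trans IH); case: n {IH} => [//|n]; rewrite leq_exp2r //.
Qed.

Lemma fact_mono m n : (m <= n)%nat -> (m`! <= n`!)%nat.
Proof.
elim: n => [|n IH]; first by rewrite leqn0 => /eqP ->.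
rewrite leq_eqVlt => /orP [/eqP ->|h] //.
rewrite factS; apply: leq_trans (IH h) _; exact: leq_pmull.
Qed.

Lemma INR_expn a b : INR (expn a b) = (INR a ^ b)%R.
Proof.
elim: b => [|b IH] //.
by rewrite expnS -multE mult_INR IH.
Qed.

Lemma ln_le' x y : (0 < x)%R -> (x <= y)%R -> (ln x <= ln y)%R.
Proof. move=> h [h'|->]; [left; exact: ln_increasing | by right]. Qed.

Lemma real_bound (l N : nat) : (2 <= l)%nat -> (N <= 243 * expn l 2)%nat ->
  (INR (N`!) <= exp (2673 * (INR l) ^ 2 * ln (INR l)))%R.
Proof.
move=> Hl HN.
set N0 := (243 * expn l 2)%nat.
have H1 : (N`! <= expn N0 N0)%nat := leq_trans (fact_mono HN) (fact_le_pow N0).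
apply: (Rle_trans _ (INR (expn N0 N0))); first by apply: le_INR; lia.
have Hl0 : (2 <= INR l)%R by change 2%R with (INR 2); apply: le_INR; lia.
have HN0 : INR N0 = (243 * INR l ^ 2)%R by rewrite /N0 -multE mult_INR INR_expn (INR_IZR_INZ 243) /=.
have HN0p : (0 < INR N0)%R by rewrite HN0; nra.
rewrite INR_expn -Rpower_pow // /Rpower.
have exp_le : forall x y, (x <= y)%R -> (exp x <= exp y)%R.
  by move=> x y [h|->]; [left; apply: exp_increasing | right].
apply: exp_le.
have ln2 : (0 < ln 2)%R by rewrite -ln_1; apply: ln_increasing; lra.
have lnl : (ln 2 <= ln (INR l))%R by apply: ln_le'; lra.
have l243 : (ln 243 <= 9 * ln 2)%R.
  have e9 : (9 = INR 9)%R by rewrite (INR_IZR_INZ 9) /=.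
  rewrite e9 -ln_pow; last lra.
  apply: ln_le'; lra.
have lnN0 : (ln (INR N0) <= 11 * ln (INR l))%R.
  rewrite HN0 ln_mult; [|lra|nra].
  rewrite ln_pow; last lra.
  change (INR 2) with 2%R. lra.
rewrite HN0 in lnN0 *.
have : (0 <= INR l ^ 2)%R by nra.
move: lnN0; set a := (INR l ^ 2)%R; set X := ln _; set Y := ln _.
move=> h1 h2.
have := Rmult_le_compat_l (243 * a) _ _ ltac:(lra) h1.
lra.
Qed.
Definition evG (d r : nat -> nat) (w : seq (bool * bool)) : prodP d :=
  fun n => evc (d n.+1) (r n.+1) w.

Lemma evG_cat d r u v : mulP (evG d r u) (evG d r v) = evG d r (u ++ v).
Proof. apply: functional_extensionality_dep => n; by rewrite /mulP /evG evc_cat. Qed.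

Lemma ball_ex d r l g : ball [:: alpha d; beta d r] l g ->
  exists w, (size w <= l)%nat /\ g = evG d r w.
Proof.
move=> [ws [Hs [HF ->]]].
suff [w [Hw ->]] : exists w, size w = size ws /\ eval_word ws = evG d r w.
  by exists w; rewrite Hw.
elim: ws HF {Hs} => [|[s b] ws IH] HF.
  by exists [::]; split => //; apply: functional_extensionality_dep => n.
inversion HF as [|? ? Hx HF']; subst; clear HF.
have [w [Hw E]] := IH HF'.
change (eval_word ((s, b) :: ws)) with (mulP (if b then invP s else s) (eval_word ws)).
rewrite E.
case: Hx => [e|[e|[]]]; rewrite /= in e; subst s.
- exists ((false, b) :: w); split; first by rewrite /= Hw.
  apply: functional_extensionality_dep => n.
  by rewrite /mulP /evG /=; case: b.
- exists ((true, b) :: w); split; first by rewrite /= Hw.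
  apply: functional_extensionality_dep => n.
  by rewrite /mulP /evG /=; case: b.
Qed.

Lemma ball_of_word d r l w : (size w <= l)%nat -> ball [:: alpha d; beta d r] l (evG d r w).
Proof.
move=> Hw.
exists (map (fun x => (if x.1 then beta d r else alpha d, x.2)) w).
split; first by rewrite size_map.
split.
  elim: w {Hw} => [|[s b] w IH] /=; constructor => //.
  by case: s; [right; left | left].
elim: w {Hw} => [|[s b] w IH].
  by apply: functional_extensionality_dep => n.
change (eval_word (map (fun x => (if x.1 then beta d r else alpha d, x.2)) ((s, b) :: w)))
  with (mulP (if b then invP (if s then beta d r else alpha d) else (if s then beta d r else alpha d))
          (eval_word (map (fun x => (if x.1 then beta d r else alpha d, x.2)) w))).
rewrite -IH.
apply: functional_extensionality_dep => n.
by rewrite /mulP /evG /=; case: s; case: b.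
Qed.

Lemma sumn_map_le (X : Type) (f : X -> nat) c s :
  (forall x, (f x <= c)%nat) -> (sumn (map f s) <= size s * c)%nat.
Proof. move=> H; elim: s => [|x s IH] //=; rewrite mulSn; exact: leq_add. Qed.

Definition Dm (d r : nat -> nat) (T n : nat) : nat := mD (d n.+1) (r n.+1) T.
Definition Rm (r : nat -> nat) (T n : nat) : nat := mR (r n.+1) T.

Section Blocks.
Variables (d r : nat -> nat) (T : nat).

Notation BT := {m : 'I_T & 'I_(Dm d r T m)}.

Definition blkf (f : forall m : 'I_T, {perm 'I_(Dm d r T m)}) (x : BT) : BT :=
  Tagged (fun m : 'I_T => 'I_(Dm d r T m)) (f (tag x) (tagged x)).

Lemma blkf_can f : cancel (blkf f) (blkf (fun m => (f m)^-1)%g).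
Proof. by case=> m y; rewrite /blkf /= permK. Qed.

Definition blk f : {perm BT} := perm (can_inj (blkf_can f)).

Lemma blkE f (m : 'I_T) (y : 'I_(Dm d r T m)) :
  blk f (Tagged (fun m : 'I_T => 'I_(Dm d r T m)) y) = Tagged (fun m : 'I_T => 'I_(Dm d r T m)) (f m y).
Proof. by rewrite permE. Qed.

Lemma blkM f g : blk (fun m => f m * g m)%g = (blk f * blk g)%g.
Proof. by apply/permP => [[m y]]; rewrite permM !blkE permM. Qed.

Lemma blk_inj f g : blk f = blk g -> forall m, f m = g m.
Proof.
move=> E m; apply/permP => y.
have := congr1 (fun p : {perm BT} => p (Tagged (fun m : 'I_T => 'I_(Dm d r T m)) y)) E.
rewrite /= !blkE => H; exact: (eq_from_Tagged H).
Qed.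

Definition evQ (w : seq (bool * bool)) : {perm BT} :=
  blk (fun m => evc (Dm d r T m) (Rm r T m) w).

Lemma evQ_cat u v : evQ (u ++ v) = (evQ u * evQ v)%g.
Proof.
rewrite /evQ -blkM; congr blk.
by apply: functional_extensionality_dep => m; rewrite evc_cat.
Qed.

Lemma card_BT : (#|{: BT}| <= T * (3 * T))%nat.
Proof.
rewrite card_tagged.
have H : forall m : 'I_T, (#|'I_(Dm d r T m)| <= 3 * T)%nat.
  by move=> m; rewrite card_ord /Dm /mD; lia.
apply: leq_trans (sumn_map_le (enum 'I_T) H) _.
by rewrite size_enum_ord.
Qed.

End Blocks.
Lemma key (d r : nat -> nat) (T L : nat) u v :
  (forall n, (0 < r n.+1)%nat /\ (r n.+1 + r n.+1 < d n.+1)%nat) ->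
  (L + L + L + L + 2 <= T)%nat ->
  (forall n, (T <= n.+1)%nat -> (T <= r n.+1)%nat /\ (T <= d n.+1 - (r n.+1 + r n.+1))%nat) ->
  (size u <= L)%nat -> (size v <= L)%nat ->
  (evG d r u = evG d r v <-> evQ d r T u = evQ d r T v).
Proof.
move=> Hc HT Hgen Hu Hv; split.
- move=> E; rewrite /evQ; congr blk.
  apply: functional_extensionality_dep => m.
  have [h1 h2] := Hc m.
  apply: (proj1 (coord_equiv h1 h2 HT Hu Hv)).
  exact: (congr1 (fun f : prodP d => f m) E).
- move=> E; have H := blk_inj E.
  apply: functional_extensionality_dep => n.
  have [h1 h2] := Hc n.
  apply: (proj2 (coord_equiv h1 h2 HT Hu Hv)).
  case: (ltnP n T) => hn.
    exact: (H (Ordinal hn)).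
  have hT : (T.-1 < T)%nat by lia.
  have [g1 g2] := Hgen n ltac:(lia).
  have [g3 g4] := Hgen T.-1 ltac:(lia).
  have e1 : mD (d n.+1) (r n.+1) T = Dm d r T (Ordinal hT).
    by rewrite /Dm /mD /=; lia.
  have e2 : mR (r n.+1) T = Rm r T (Ordinal hT).
    by rewrite /Rm /mR /=; lia.
  rewrite e1 e2.
  exact: (H (Ordinal hT)).
Qed.

Lemma card_perm_all (X : finType) : #|{: {perm X}}| = (#|{: X}|)`!.
Proof.
rewrite (eq_card (B := perm_on [set: X])).
  by rewrite card_perm cardsE.
move=> p; rewrite inE unfold_in /perm_on /=.
by apply/esym/subsetP => i _; rewrite in_set.
Qed.
Theorem proposition3p11 :
  exists C : R, (0 < C)%R /\
  forall d r : nat -> nat,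
    (forall m n, 1 <= m -> m <= n -> d m <= d n) ->
    (forall n, 1 <= n -> odd (d n) /\ 5 <= d n) ->
    (forall n, 1 <= n -> 2 * r n + 1 <= d n) ->
    (forall n, 1 <= n -> n <= r n) ->
    (forall n, 1 <= n -> n <= d n - 2 * r n) ->
    forall l : nat, 2 <= l ->
      LEF_le [:: alpha d; beta d r] l
        (exp (C * (INR l) ^ 2 * ln (INR l)))%R.
Proof.
exists 2673%R; split; first lra.
move=> d r Hmono Hodd H2r Hrn Hdr l Hl.
pose L := (l + l)%nat. pose T := (L + L + L + L + 2)%nat.
have Hc : forall n, (0 < r n.+1)%nat /\ (r n.+1 + r n.+1 < d n.+1)%nat.
  move=> n; have h1 := Hrn n.+1 isT; have h2 := Hdr n.+1 isT; split; lia.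
have Hgen : forall n, (T <= n.+1)%nat ->
    (T <= r n.+1)%nat /\ (T <= d n.+1 - (r n.+1 + r n.+1))%nat.
  move=> n hn; have h1 := Hrn n.+1 isT; have h2 := Hdr n.+1 isT; split; lia.
have HT : (L + L + L + L + 2 <= T)%nat by [].
pose P := fun g w => (size w <= l)%nat /\ g = evG d r w.
pose pick := fun g => epsilon (inhabits [::]) (P g).
have pickP : forall g, ball [:: alpha d; beta d r] l g -> P g (pick g).
  move=> g Hg; apply: epsilon_spec; exact: ball_ex Hg.
have HlL : (l <= L)%nat by rewrite /L; lia.
eexists; exists (fun g => evQ d r T (pick g)); split; first split.
- move=> g h Hg Hh E.
  have [s1 e1] := pickP g Hg; have [s2 e2] := pickP h Hh.
  rewrite e1 e2; apply: (proj2 (key Hc HT Hgen (leq_trans s1 HlL) (leq_trans s2 HlL))).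
  exact: E.
- move=> g h Hg Hh Hgh.
  have [s1 e1] := pickP g Hg; have [s2 e2] := pickP h Hh.
  have [s3 e3] := pickP _ Hgh.
  rewrite -evQ_cat.
  have s12 : (size (pick g ++ pick h) <= L)%nat by rewrite size_cat /L; lia.
  apply: (proj1 (key Hc HT Hgen (leq_trans s3 HlL) s12)).
  by rewrite -e3 -evG_cat -e1 -e2.
- rewrite (card_perm_all {m : 'I_T & 'I_(Dm d r T m)}).
  apply: real_bound => //.
  apply: leq_trans (card_BT d r T) _.
  rewrite /T /L; nia.
Qed.
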